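(* Let $G$ be a labeled complete graph, let $0<\gamma<\alpha<1/2$, and let $x$ be a fractional clustering of $G$. Run the following algorithm: set $S=V(G)$; while $S\ne\emptyset$, for each $u\in S$ let $T_u=\{w\in S\setminus\{u\}: x_{uw}\le\alpha\}$ and $T^*_u=\{w\in S\setminus\{u\}:x_{uw}\le\gamma\}$, choose a pivot $u\in S$ maximizing $|T^*_u|$, let $T=T_u$, and if $\sum_{w\in T}x_{uw}\ge\alpha|T|/2$ output $\{u\}$ and remove $u$ from $S$, otherwise output $\{u\}\cup T$ and remove $\{u\}\cup T$ from $S$. Consider any iteration in which the cluster $\{u\}\cup T$ is output (i.e. $\sum_{w\in T}x_{uw}<\alpha|T|/2$), and let $S$ denote the set of remaining vertices at the start of that iteration. Then for every $z\in S\setminus(\{u\}\cup T)$, \[ \bigl|N^+(z)\cap(\{u\}\cup T)\bigr| \le \max\left\{\tfrac{1}{1-2\alpha},\tfrac{2}{\alpha}\right\}\left(\sum_{w\in N^+(z)\cap(\{u\}\cup T)}x_{zw}+\sum_{w\in N^-(z)\cap(\{u\}\cup T)}(1-x_{zw})\right). \]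
   Context: A fractional clustering of $G$ is a vector $x$ indexed by unordered pairs of distinct vertices with $x_{uv}\in[0,1]$ and $x_{vz}\le x_{vw}+x_{wz}$ for all distinct $v,w,z$; $x_{uu}=0$. $N^+(z)$, $N^-(z)$ are the sets of vertices joined to $z$ by a $+$ edge, resp. $-$ edge. (In the paper's terminology: the left side is the total cluster-cost and the sum on the right the total LP-cost of the edges from $z$ to the cluster $\{u\}\cup T$.) *)

(* Defs.v *)
From HB Require Import structures.
From mathcomp Require Import all_boot all_order all_algebra.
Set Implicit Arguments. Unset Strict Implicit. Unset Printing Implicit Defensive.
Import Order.TTheory GRing.Theory Num.Theory.
Local Open Scope ring_scope.

Section Defs.
Variables (R : realFieldType) (V : finType).

(* A labeled complete graph on V: each pair of distinct vertices is joined
   by a + edge (plus u v = true) or a - edge (plus u v = false). *)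
Definition labeled_complete (plus : rel V) : Prop := forall u v, plus u v = plus v u.

Definition Nplus (plus : rel V) (z : V) : {set V} := [set w | (w != z) && plus z w].
Definition Nminus (plus : rel V) (z : V) : {set V} := [set w | (w != z) && ~~ plus z w].

Definition fractional_clustering (x : V -> V -> R) : Prop :=
  [/\ forall u v, x u v = x v u,
      forall u, x u u = 0,
      forall u v, 0 <= x u v <= 1
    & forall v w z, v != w -> w != z -> v != z -> x v z <= x v w + x w z].

Variable x : V -> V -> R.

(* T_u (threshold a = alpha) and T*_u (threshold a = gamma) *)
Definition Tball (S : {set V}) (u : V) (a : R) : {set V} :=
  [set w in S | (w != u) && (x u w <= a)].

Definition is_pivot (gamma : R) (S : {set V}) (u : V) : Prop :=
  u \in S /\ forall v, v \in S -> (#|Tball S v gamma| <= #|Tball S u gamma|)%N.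

Definition alg_step (alpha gamma : R) (S S' : {set V}) : Prop :=
  exists u, is_pivot gamma S u /\
    let T := Tball S u alpha in
    if alpha * #|T|%:R / 2 <= \sum_(w in T) x u w
    then S' = S :\ u
    else S' = S :\: (u |: T).

Inductive alg_reachable (alpha gamma : R) : {set V} -> Prop :=
| reach_init : alg_reachable alpha gamma [set: V]
| reach_step S S' : alg_reachable alpha gamma S -> alg_step alpha gamma S S' ->
    alg_reachable alpha gamma S'.

End Defs.

(* Main.v *)
From mathcomp Require Import lra.
Require Import Defs.
From HB Require Import structures.
From mathcomp Require Import all_boot all_order all_algebra.
Import Order.TTheory GRing.Theory Num.Theory.
Local Open Scope ring_scope.

Theorem lemma5 (R : realFieldType) (V : finType) (plus : rel V)
  (x : V -> V -> R) (alpha gamma : R) (S : {set V}) (u z : V) :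
  labeled_complete plus ->
  0 < gamma -> gamma < alpha -> alpha < 1 / 2 ->
  fractional_clustering x ->
  alg_reachable x alpha gamma S ->
  is_pivot x gamma S u ->
  \sum_(w in Tball x S u alpha) x u w < alpha * #|Tball x S u alpha|%:R / 2 ->
  z \in S :\: (u |: Tball x S u alpha) ->
  #|Nplus plus z :&: (u |: Tball x S u alpha)|%:R <=
    Num.max ((1 - 2 * alpha)^-1) (2 / alpha) *
    (\sum_(w in Nplus plus z :&: (u |: Tball x S u alpha)) x z w +
     \sum_(w in Nminus plus z :&: (u |: Tball x S u alpha)) (1 - x z w)).
Proof.
move=> _ hg hga ha2 [xs x0 x01 xtri] _ _ hsum hz.
set T := Tball x S u alpha in hsum hz *.
set C := u |: T.
have ha0 : 0 < alpha by apply: lt_trans hga.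
move: hz; rewrite in_setD in_setU1 negb_or => /andP[/andP[zu zT] zS].
have huT : u \notin T by rewrite inE eqxx /= andbF.
have hd : alpha < x u z.
  by move: zT; rewrite inE zS zu /= real_leNgt ?num_real // negbK.
have zC : z \notin C by rewrite in_setU1 negb_or zu.
set h := fun w => if plus z w then x z w else 1 - x z w.
have Hcost : \sum_(w in Nplus plus z :&: C) x z w +
     \sum_(w in Nminus plus z :&: C) (1 - x z w) = \sum_(w in C) h w.
  rewrite [RHS](bigID (fun w => plus z w)) /=; congr (_ + _).
    apply: eq_big => w; last by move=> /setIP[]; rewrite inE /h => /andP[_ ->].
    rewrite in_setI /Nplus /Nminus in_set; case: (eqVneq w z) => [->|wz]; first by rewrite (negbTE zC) andbF.
    by rewrite /= andbC.
  apply: eq_big => w; last by move=> /setIP[]; rewrite inE /h => /andP[_ /negbTE ->].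
  rewrite in_setI /Nplus /Nminus in_set; case: (eqVneq w z) => [->|wz]; first by rewrite (negbTE zC) andbF.
    by rewrite /= andbC.
have tri1 w : w \in C -> x z w <= x z u + x u w.
  move=> wC; case: (w =P u) => [->|/eqP wu]; first by rewrite x0 addr0.
  apply: xtri => //; first by rewrite eq_sym.
  by apply: contraNneq zC => ->.
have tri2 w : w \in C -> x z u <= x z w + x u w.
  move=> wC; case: (w =P u) => [->|/eqP wu]; first by rewrite x0 addr0.
  rewrite (xs u w); apply: xtri => //; by apply: contraNneq zC => ->.
have dzu : x z u = x u z by rewrite xs.
have hpos w : 0 <= h w by rewrite /h; have := x01 z w; case/andP=> ? ?; case: (plus z w); lra.
have costpos : 0 <= \sum_(w in C) h w by apply: sumr_ge0 => w _.
have hM1 : (1 - 2 * alpha)^-1 <= Num.max ((1 - 2 * alpha)^-1) (2 / alpha) by rewrite le_max lexx.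
have hM2 : 2 / alpha <= Num.max ((1 - 2 * alpha)^-1) (2 / alpha) by rewrite le_max lexx orbT.
set M := Num.max _ _ in hM1 hM2 *.
have hxuw w : w \in C -> x u w <= alpha.
  rewrite in_setU1 => /orP[/eqP->|]; first by rewrite x0 ltW.
  by rewrite inE => /and3P[_ _ ->].
have M0 : 0 <= M by apply: le_trans hM2; rewrite divr_ge0 // ltW.
case: (lerP (1 - alpha) (x u z)) => hd2.
- have H1 : #|Nplus plus z :&: C|%:R <= M * \sum_(w in Nplus plus z :&: C) x z w.
    have -> : #|Nplus plus z :&: C|%:R = \sum_(w in Nplus plus z :&: C) (1:R) by rewrite sumr_const.
    rewrite mulr_sumr; apply: ler_sum => w /setIP[_ wC].
    have h1 : 1 - 2 * alpha <= x z w by have := tri2 w wC; have := hxuw w wC; lra.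
    have h0 : 0 < 1 - 2 * alpha by lra.
    rewrite -(mulVf (lt0r_neq0 h0)); apply: ler_pM => //.
      by rewrite invr_ge0 ltW.
    exact: ltW.
  have H2 : 0 <= \sum_(w in Nminus plus z :&: C) (1 - x z w).
    apply: sumr_ge0 => w _; have := x01 z w; case/andP=> ? ?; lra.
  rewrite mulrDr; apply: le_trans H1 _; rewrite lerDl; exact: mulr_ge0.
- rewrite Hcost.
  have L : \sum_(w in C) (alpha - x u w) <= \sum_(w in C) h w.
    apply: ler_sum => w wC; rewrite /h; have := tri1 w wC; have := tri2 w wC.
    by case: (plus z w) => ? ?; lra.
  have E : \sum_(w in C) (alpha - x u w) = alpha * (1 + #|T|%:R) - \sum_(w in T) x u w.
    rewrite sumrB sumr_const big_setU1 //= x0 add0r cardsU1 huT -[alpha *+ _]mulr_natr natrD.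
    by [].
  have hPC : (#|Nplus plus z :&: C| <= #|C|)%N by apply: subset_leq_card; apply: subsetIr.
  rewrite -(ler_nat R) cardsU1 huT natrD /= in hPC.
  move: hsum L hPC; rewrite E.
  set t := #|T|%:R; set s := \sum_(w in T) x u w; set c := \sum_(w in C) h w; set p := _%:R.
  move=> hs hc hp.
  have ha : alpha * (1 + t) <= 2 * c by nra.
  apply: (le_trans hp); apply: le_trans (ler_wpM2r costpos hM2).
  apply: (le_trans (_ : _ <= alpha^-1 * (2 * c))).
    rewrite -{1}(mulKf (lt0r_neq0 ha0) (1 + t)); apply: ler_wpM2l => //.
    by rewrite invr_ge0 ltW.
  by rewrite mulrCA mulrA.
Qed.
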